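(* Let $A_1,\dots,A_m\in\mathbb{S}^n$, $b\in\mathbb{R}^m$, $C\in\mathbb{S}^n$, and let $p$ be such that Assumption 1 holds, with associated dimension $m'$. Let $Y\in\mathcal{M}_p$ be a second-order critical point of (P) and $X=YY^\top$ (so $X$ lies in the relative interior of the face $\mathcal{F}_X$). If $\operatorname{rank}(Y)=p$, then $S=S(Y)$ has at most $\left\lfloor\frac{\dim\mathcal{F}_X-\Delta}{p}\right\rfloor$ negative eigenvalues, where $\Delta=\frac{p(p+1)}{2}-m'$. In particular, if $\dim\mathcal{F}_X<\Delta+p$, then $S$ is positive semidefinite and $X$ is globally optimal for (SDP) and $Y$ is globally optimal for (P).
   Context: $\mathbb{S}^n$: real symmetric $n\times n$ matrices; $\langle U,V\rangle=\operatorname{tr}(U^\top V)$. $\mathcal{A}(X)_i=\langle A_i,X\rangle$, $\mathcal{A}^*(\nu)=\sum_i\nu_iA_i$. $\mathcal{C}=\{X\in\mathbb{S}^n:\mathcal{A}(X)=b,\ X\succeq0\}$ (non-empty); (SDP): minimize $\langle C,X\rangle$ over $\mathcal{C}$. $\mathcal{M}_p=\{Y\in\mathbb{R}^{n\times p}:\mathcal{A}(YY^\top)=b\}$; (P): minimize $\langle CY,Y\rangle$ over $\mathcal{M}_p$. Assumption 1 (for $p$ with $\mathcal{M}_p\ne\emptyset$): either (a) $A_1Y,\dots,A_mY$ are linearly independent for all $Y\in\mathcal{M}_p$, or (b) $\operatorname{span}\{A_1Y,\dots,A_mY\}$ has constant dimension for all $Y$ in an open neighborhood of $\mathcal{M}_p$;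 $m'$ is the dimension of this span for $Y\in\mathcal{M}_p$. For $Y\in\mathcal{M}_p$: $T_Y=\{\dot Y:\langle A_iY,\dot Y\rangle=0\ \forall i\}$; $G_{ij}=\langle A_iY,A_jY\rangle$, $\mu=G^\dagger\mathcal{A}(CYY^\top)$, $S(Y)=C-\mathcal{A}^*(\mu)$. $Y$ is second-order critical if $S(Y)Y=0$ and $\langle\dot Y,S(Y)\dot Y\rangle\ge0$ for all $\dot Y\in T_Y$. A face of convex $\mathcal{C}$ is a convex subset $\mathcal{F}$ such that every closed segment in $\mathcal{C}$ with a relative interior point in $\mathcal{F}$ has both endpoints in $\mathcal{F}$; $\mathcal{F}_X$ is the unique face containing $X$ in its relative interior; its dimension is that of its affine hull. *)

(* Defs.v *)
From HB Require Import structures.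
From mathcomp Require Import all_boot all_order all_algebra.
From mathcomp Require Import boolp classical_sets reals.

Set Implicit Arguments.
Unset Strict Implicit.
Unset Printing Implicit Defensive.

Import Order.TTheory GRing.Theory Num.Theory.
Local Open Scope ring_scope.

Section SDPDefs.
Variable R : realType.

Definition inprod (k l : nat) (U V : 'M[R]_(k, l)) : R := \tr (U^T *m V).

Definition frob2 (k l : nat) (U : 'M[R]_(k, l)) : R := inprod U U.

Definition sym_mx (n : nat) (X : 'M[R]_n) : Prop := X^T = X.

Definition psd (n : nat) (X : 'M[R]_n) : Prop :=
  sym_mx X /\ forall v : 'cV[R]_n, 0 <= (v^T *m X *m v) 0 0.

Definition Aop (n m : nat) (A : 'I_m -> 'M[R]_n) (X : 'M[R]_n) : 'I_m -> R :=
  fun i => inprod (A i) X.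

Definition Aadj (n m : nat) (A : 'I_m -> 'M[R]_n) (nu : 'cV[R]_m) : 'M[R]_n :=
  \sum_(i < m) nu i 0 *: A i.

Definition SDPset (n m : nat) (A : 'I_m -> 'M[R]_n) (b : 'I_m -> R)
  (X : 'M[R]_n) : Prop :=
  (forall i, Aop A X i = b i) /\ psd X.

Definition Mp (n m p : nat) (A : 'I_m -> 'M[R]_n) (b : 'I_m -> R)
  (Y : 'M[R]_(n, p)) : Prop :=
  forall i, Aop A (Y *m Y^T) i = b i.

(* the matrix whose i-th row is the vectorization of A_i Y;
   its rank is dim span{A_1 Y, ..., A_m Y} *)
Definition Amat (n m p : nat) (A : 'I_m -> 'M[R]_n) (Y : 'M[R]_(n, p))
  : 'M[R]_(m, n * p) :=
  \matrix_(i < m) mxvec (A i *m Y).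

Definition mopen (k l : nat) (U : set 'M[R]_(k, l)) : Prop :=
  forall Y, U Y -> exists2 e : R, 0 < e &
    forall Z, frob2 (Z - Y) < e -> U Z.

Definition assumption1 (n m : nat) (A : 'I_m -> 'M[R]_n) (b : 'I_m -> R)
  (p : nat) : Prop :=
  (exists Y : 'M[R]_(n, p), Mp A b Y) /\
  ((forall Y : 'M[R]_(n, p), Mp A b Y -> row_free (Amat A Y)) \/
   (exists U : set 'M[R]_(n, p), mopen U /\ (forall Y, Mp A b Y -> U Y) /\
      exists r : nat, forall Y, U Y -> \rank (Amat A Y) = r)).

Definition is_MP_pinv (k : nat) (G H : 'M[R]_k) : Prop :=
  [/\ G *m H *m G = G, H *m G *m H = H,
      (G *m H)^T = G *m H & (H *m G)^T = H *m G].

Definition mp_pinv (k : nat) (G : 'M[R]_k) : 'M[R]_k :=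
  xget 0 [set H | is_MP_pinv G H].

Definition Gram (n m p : nat) (A : 'I_m -> 'M[R]_n) (Y : 'M[R]_(n, p))
  : 'M[R]_m :=
  \matrix_(i < m, j < m) inprod (A i *m Y) (A j *m Y).

Definition mu (n m p : nat) (A : 'I_m -> 'M[R]_n) (C : 'M[R]_n)
  (Y : 'M[R]_(n, p)) : 'cV[R]_m :=
  mp_pinv (Gram A Y) *m \col_(i < m) Aop A (C *m Y *m Y^T) i.

Definition Smat (n m p : nat) (A : 'I_m -> 'M[R]_n) (C : 'M[R]_n)
  (Y : 'M[R]_(n, p)) : 'M[R]_n :=
  C - Aadj A (mu A C Y).

Definition tangent (n m p : nat) (A : 'I_m -> 'M[R]_n) (Y : 'M[R]_(n, p))
  (Yd : 'M[R]_(n, p)) : Prop :=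
  forall i, inprod (A i *m Y) Yd = 0.

Definition second_order_critical (n m p : nat) (A : 'I_m -> 'M[R]_n)
  (C : 'M[R]_n) (Y : 'M[R]_(n, p)) : Prop :=
  Smat A C Y *m Y = 0 /\
  forall Yd, tangent A Y Yd -> 0 <= inprod Yd (Smat A C Y *m Yd).

Definition sdp_opt (n m : nat) (A : 'I_m -> 'M[R]_n) (b : 'I_m -> R)
  (C X : 'M[R]_n) : Prop :=
  SDPset A b X /\ forall X', SDPset A b X' -> inprod C X <= inprod C X'.

Definition P_opt (n m p : nat) (A : 'I_m -> 'M[R]_n) (b : 'I_m -> R)
  (C : 'M[R]_n) (Y : 'M[R]_(n, p)) : Prop :=
  Mp A b Y /\ forall Y' : 'M[R]_(n, p), Mp A b Y' -> inprod (C *m Y) Y <= inprod (C *m Y') Y'.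

Definition convex_set (n : nat) (F : set 'M[R]_n) : Prop :=
  forall U V (t : R), F U -> F V -> 0 <= t <= 1 -> F ((1 - t) *: U + t *: V).

Definition is_face (n : nat) (K F : set 'M[R]_n) : Prop :=
  [/\ (forall X, F X -> K X), convex_set F &
      forall U V (t : R), K U -> K V -> 0 < t < 1 ->
        F ((1 - t) *: U + t *: V) -> F U /\ F V].

Definition aff_hull (n : nat) (F : set 'M[R]_n) (Z : 'M[R]_n) : Prop :=
  exists k (w : 'I_k -> R) (Zs : 'I_k -> 'M[R]_n),
    [/\ forall i, F (Zs i), \sum_(i < k) w i = 1 & Z = \sum_(i < k) w i *: Zs i].

Definition relint (n : nat) (F : set 'M[R]_n) (X : 'M[R]_n) : Prop :=
  F X /\ exists2 e : R, 0 < e &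
    forall Z, aff_hull F Z -> frob2 (Z - X) < e -> F Z.

(* dimension of the affine hull of F: the maximal number d of points Z_i of F
   such that the differences Z_i - X0 (X0 in F) are linearly independent *)
Definition aff_indep (n : nat) (F : set 'M[R]_n) (X0 : 'M[R]_n) (d : nat) : Prop :=
  exists Zs : 'I_d -> 'M[R]_n,
    (forall i, F (Zs i)) /\ row_free (\matrix_(i < d) mxvec (Zs i - X0)).

Definition aff_dim (n : nat) (F : set 'M[R]_n) (d : nat) : Prop :=
  (exists X0, F X0 /\ aff_indep F X0 d) /\
  (forall X0 k, F X0 -> aff_indep F X0 k -> (k <= d)%N).

Definition eigenvalue_list (n : nat) (S : 'M[R]_n) (s : seq R) : Prop :=
  char_poly S = \prod_(x <- s) ('X - x%:P).

End SDPDefs.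

(* Main.v *)
Require Import Defs.
From HB Require Import structures.
From mathcomp Require Import all_boot all_order all_algebra.
From mathcomp Require Import boolp classical_sets reals.
From mathcomp Require Import complex ring lra zify.

Set Implicit Arguments.
Unset Strict Implicit.
Unset Printing Implicit Defensive.
Import Order.TTheory GRing.Theory Num.Theory.
Local Open Scope ring_scope.

Section Basic.
Variable R : realType.

Lemma inprodE k l (U V : 'M[R]_(k,l)) :
  inprod U V = \sum_i \sum_j U i j * V i j.
Proof.
rewrite /inprod /mxtrace exchange_big /=; apply: eq_bigr => j _.
by rewrite mxE; apply: eq_bigr => i _; rewrite mxE.
Qed.

Lemma inprodC k l (U V : 'M[R]_(k,l)) : inprod U V = inprod V U.
Proof. by rewrite !inprodE; do 2!(apply: eq_bigr => ? _); rewrite mulrC. Qed.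

Lemma inprodDr k l (U V W : 'M[R]_(k,l)) : inprod U (V + W) = inprod U V + inprod U W.
Proof. by rewrite /inprod mulmxDr mxtraceD. Qed.

Lemma inprodZr k l a (U V : 'M[R]_(k,l)) : inprod U (a *: V) = a * inprod U V.
Proof. by rewrite /inprod -scalemxAr mxtraceZ. Qed.

Lemma inprodNr k l (U V : 'M[R]_(k,l)) : inprod U (- V) = - inprod U V.
Proof. by rewrite /inprod mulmxN linearN. Qed.

Lemma inprod0r k l (U : 'M[R]_(k,l)) : inprod U 0 = 0.
Proof. by rewrite /inprod mulmx0 mxtrace0. Qed.

Lemma inprodDl k l (U V W : 'M[R]_(k,l)) : inprod (V + W) U = inprod V U + inprod W U.
Proof. by rewrite inprodC inprodDr !(inprodC U). Qed.

Lemma inprodZl k l a (U V : 'M[R]_(k,l)) : inprod (a *: V) U = a * inprod V U.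
Proof. by rewrite inprodC inprodZr inprodC. Qed.

Lemma inprod_sumr k l I (r : seq I) (P : pred I) (F : I -> 'M[R]_(k,l)) U :
  inprod U (\sum_(i <- r | P i) F i) = \sum_(i <- r | P i) inprod U (F i).
Proof.
elim/big_rec2: _ => [|i y M _ <-]; first by rewrite inprod0r.
by rewrite inprodDr.
Qed.

Lemma inprod_ge0 k l (U : 'M[R]_(k,l)) : 0 <= inprod U U.
Proof.
by rewrite inprodE; apply: sumr_ge0 => i _; apply: sumr_ge0 => j _; rewrite -expr2 sqr_ge0.
Qed.

Lemma inprod_eq0 k l (U : 'M[R]_(k,l)) : inprod U U = 0 -> U = 0.
Proof.
rewrite inprodE => /eqP; rewrite psumr_eq0; last first.
  by move=> i _; apply: sumr_ge0 => j _; rewrite -expr2 sqr_ge0.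
move=> /allP H; apply/matrixP => i j; rewrite mxE.
have /H : i \in index_enum 'I_k by rewrite mem_index_enum.
rewrite /= psumr_eq0; last by move=> j' _; rewrite -expr2 sqr_ge0.
move=> /allP /(_ j) ; rewrite mem_index_enum => /(_ isT) /eqP.
by move/eqP; rewrite -expr2 sqrf_eq0 => /eqP.
Qed.

Lemma inprod_vec k l (U V : 'M[R]_(k,l)) :
  inprod U V = (mxvec U *m (mxvec V)^T) 0 0.
Proof.
rewrite inprodE mxE (reindex _ (curry_mxvec_bij _ _)) /= pair_bigA /=.
by apply: eq_bigr => -[i j] _; rewrite /= mxE !mxvecE.
Qed.

Lemma quadE k (v : 'cV[R]_k) (M : 'M[R]_k) :
  (v^T *m M *m v) 0 0 = \sum_i \sum_j v i 0 * M i j * v j 0.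
Proof.
rewrite mxE exchange_big /=; apply: eq_bigr => j _; rewrite mxE mulr_suml.
by apply: eq_bigr => i _; rewrite !mxE.
Qed.

Lemma trTT_eq0 k l (W : 'M[R]_(k,l)) : W^T *m W = 0 -> W = 0.
Proof. by move=> H; apply: inprod_eq0; rewrite /inprod H mxtrace0. Qed.

Lemma rowfree_inj m n (A : 'M[R]_(m,n)) :
  (forall v : 'rV_m, v *m A = 0 -> v = 0) -> row_free A.
Proof.
move=> H; rewrite -kermx_eq0; apply/eqP/row_matrixP => i.
by rewrite row0; apply: H; rewrite -row_mul mulmx_ker row0.
Qed.

Lemma YTY_unit n p (Y : 'M[R]_(n,p)) : \rank Y = p -> Y^T *m Y \in unitmx.
Proof.
move=> rY; rewrite -row_free_unit; apply: rowfree_inj => v Hv.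
have rfT : row_free Y^T by rewrite /row_free mxrank_tr rY.
have : Y *m v^T = 0.
  apply: trTT_eq0; rewrite trmx_mul trmxK mulmxA -(mulmxA v) Hv mul0mx //.
move=> /(congr1 trmx); rewrite trmx_mul trmxK trmx0 => H.
by apply: (row_free_inj rfT); rewrite H mul0mx.
Qed.

End Basic.

Section Split.
Variable R : realType.

Lemma conjR (x : R) : Num.conj (x%:C)%C = (x%:C)%C :> R[i].
Proof. by apply/eqP; rewrite eq_complex /= oppr0 !eqxx. Qed.

Lemma real_eig n (S : 'M[R]_n) (z : R[i]) : S^T = S ->
  eigenvalue (map_mx (real_complex R) S) z -> z = ((complex.Re z)%:C)%C.
Proof.
move=> Ssym /eigenvalueP [v Hv vnz].
set Sc := map_mx _ S in Hv.
have ScT : forall i j, Sc i j = Sc j i.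
  by move=> i j; rewrite !mxE -{1}Ssym mxE.
pose w := \sum_i \sum_j v 0 i * Sc i j * Num.conj (v 0 j).
pose n2 := \sum_j v 0 j * Num.conj (v 0 j).
have e1 : w = z * n2.
  rewrite /w exchange_big /= /n2 mulr_sumr; apply: eq_bigr => j _.
  rewrite -mulr_suml.
  have -> : \sum_i v 0 i * Sc i j = (v *m Sc) 0 j by rewrite mxE.
  by rewrite Hv mxE mulrA.
have e2 : Num.conj w = w.
  rewrite /w rmorph_sum exchange_big /=; apply: eq_bigr => i _.
  rewrite rmorph_sum; apply: eq_bigr => j _.
  rewrite !rmorphM /= conjCK ScT.
  have -> : Num.conj (Sc j i) = Sc j i by rewrite mxE conjR.
  by rewrite mulrAC [in RHS]mulrAC [v 0 j * _]mulrC.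
have n2c : Num.conj n2 = n2.
  rewrite /n2 rmorph_sum; apply: eq_bigr => j _.
  by rewrite rmorphM /= conjCK mulrC.
have n2nz : n2 != 0.
  have [i0 vi0] : exists i0, v 0 i0 != 0.
    apply/existsP; apply: contraR vnz => /existsPn H.
    by apply/eqP/rowP => j; rewrite mxE; apply/eqP/negPn/H.
  apply: lt0r_neq0; rewrite /n2 (bigD1 i0) //=.
  apply: (@lt_le_trans _ _ (v 0 i0 * Num.conj (v 0 i0))).
    by rewrite mul_conjC_gt0.
  rewrite lerDl; apply: sumr_ge0 => j _; exact: mul_conjC_ge0.
have zc : Num.conj z = z.
  have -> : z = w / n2 by rewrite e1 mulfK.
  by rewrite rmorphM fmorphV /= e2 n2c.
move: zc; clear; case: z => a b /= [] /eqP.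
move=> /eqP H; have -> : b = 0 by lra. by [].
Qed.

Lemma sym_char_split n (S : 'M[R]_n) : S^T = S ->
  exists s : seq R, char_poly S = \prod_(x <- s) ('X - x%:P).
Proof.
move=> Ssym.
set f := real_complex R.
have [rs Hrs] := closed_field_poly_normal (char_poly (map_mx f S)).
have lc : lead_coef (char_poly (map_mx f S)) = 1.
  by apply/eqP; rewrite -monicE char_poly_monic.
rewrite lc scale1r in Hrs.
exists (map (@complex.Re R) rs).
apply: (@map_poly_inj _ _ f).
rewrite map_char_poly Hrs rmorph_prod big_map.
apply: eq_big_seq => z zin.
rewrite /= map_polyXsubC /= -(real_eig Ssym) //.
by rewrite eigenvalue_root_char Hrs root_prod_XsubC.
Qed.

End Split.

Section Diag.
Variable R : realType.

Lemma sq_cancel n (S T : 'M[R]_n) (a : R) : S^T = S ->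
  (S - a%:M) *m ((S - a%:M) *m T) = 0 -> (S - a%:M) *m T = 0.
Proof.
move=> Ssym H; apply: trTT_eq0.
by rewrite trmx_mul linearB /= tr_scalar_mx Ssym -mulmxA H mulmx0.
Qed.

Lemma hornerXC n' (S : 'M[R]_n'.+1) a : horner_mx S ('X - a%:P) = S - a%:M.
Proof. by rewrite rmorphB /= horner_mx_X horner_mx_C. Qed.

Lemma red_undup n' (S : 'M[R]_n'.+1) : S^T = S -> forall t (T : 'M_n'.+1),
  horner_mx S (\prod_(x <- t) ('X - x%:P)) *m T = 0 ->
  horner_mx S (\prod_(x <- undup t) ('X - x%:P)) *m T = 0.
Proof.
move=> Ssym; elim=> [//|a t IH] T /=.
rewrite big_cons rmorphM /= -mulmxE hornerXC.
case: ifP => ain.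
  move=> H; apply: IH.
  rewrite (perm_big _ (perm_to_rem ain)) /= big_cons rmorphM /= -mulmxE hornerXC.
  rewrite -mulmxA; apply: sq_cancel => //.
  by move: H; rewrite (perm_big _ (perm_to_rem ain)) /= big_cons rmorphM /= -mulmxE hornerXC !mulmxA.
move=> H; rewrite big_cons mulrC rmorphM /= -mulmxE hornerXC -mulmxA.
apply: IH; rewrite mulmxA.
have -> : horner_mx S (\prod_(x <- t) ('X - x%:P)) *m (S - a%:M) =
  (S - a%:M) *m horner_mx S (\prod_(x <- t) ('X - x%:P)).
  by rewrite -hornerXC !mulmxE -!rmorphM mulrC.
exact: H.
Qed.

Lemma char_sim n (S D P : 'M[R]_n) : P \in unitmx -> P *m S = D *m P ->
  char_poly S = char_poly D.
Proof.
move=> Pu HPS.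
pose Pp := map_mx (@polyC R) P.
have e : Pp *m char_poly_mx S = char_poly_mx D *m Pp.
  rewrite /char_poly_mx mulmxBr mulmxBl scalar_mxC; congr (_ - _).
  by rewrite /Pp -!map_mxM HPS.
have := congr1 determinant e; rewrite !det_mulmx /Pp det_map_mx /=.
rewrite [char_poly D * _]mulrC => /mulfI; apply.
rewrite polyC_eq0 -unitfE -unitmxE //.
Qed.

Lemma char_diag n (d : 'rV[R]_n) :
  char_poly (diag_mx d) = \prod_(x <- [seq d 0 i | i <- enum 'I_n]) ('X - x%:P).
Proof.
rewrite char_poly_trig ?diag_mx_is_trig // big_map enumT.
by apply: eq_bigr => i _; rewrite mxE eqxx mulr1n.
Qed.

Lemma diag_decomp n (S : 'M[R]_n) (s : seq R) : S^T = S ->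
  char_poly S = \prod_(x <- s) ('X - x%:P) ->
  exists (P : 'M[R]_n) (d : 'rV[R]_n),
    [/\ P \in unitmx, P *m S = diag_mx d *m P &
        perm_eq s [seq d 0 i | i <- enum 'I_n]].
Proof.
case: n S => [|n'] S Ssym Hs.
  exists 1%:M, 0; split; first exact: unitmx1.
    by rewrite !flatmx0.
  have := size_char_poly S; rewrite Hs size_prod_XsubC.
  by move=> [/eqP]; rewrite size_eq0 => /eqP ->; rewrite (size0nil (size_enum_ord 0)).
have H0 : horner_mx S (\prod_(x <- undup s) ('X - x%:P)) = 0.
  rewrite -(mulmx1 (horner_mx _ _)); apply: red_undup => //.
  by rewrite -Hs Cayley_Hamilton mul0mx.
have [P Pu HP] : diagonalizable S.
  apply/diagonalizableP; exists (undup s); first exact: undup_uniq.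
  exact: mxminpoly_min.
have /(similar_diagLR Pu) [d Hd] := HP.
rewrite conjumx ?unitmx_inv // invmxK in Hd.
exists P, d; split => //.
  by rewrite Hd !mulmxA mulmxV // mul1mx.
apply: prod_XsubC_eq; rewrite -Hs -char_diag; apply: (char_sim Pu).
by rewrite Hd !mulmxA mulmxV // mul1mx.
Qed.

End Diag.

Section DiagUse.
Variable R : realType.
Variables (n : nat) (S P : 'M[R]_n) (d : 'rV[R]_n).
Hypotheses (Ssym : S^T = S) (Pu : P \in unitmx) (HPS : P *m S = diag_mx d *m P).

Let G := P *m P^T.

Lemma GT : G^T = G.
Proof. by rewrite /G trmx_mul trmxK. Qed.

Lemma commG i j : d 0 i * G i j = G i j * d 0 j.
Proof.
have e : P *m S *m P^T = diag_mx d *m G by rewrite HPS -mulmxA.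
have e2 : (P *m S *m P^T)^T = P *m S *m P^T by rewrite !trmx_mul trmxK Ssym mulmxA.
have : diag_mx d *m G = G *m diag_mx d.
  by rewrite -e -e2 e trmx_mul GT tr_diag_mx.
move/matrixP => /(_ i j); by rewrite mul_diag_mx mul_mx_diag !mxE.
Qed.

Lemma G_eq i j : G i j != 0 -> d 0 i = d 0 j.
Proof.
move=> Gnz; have := commG i j; rewrite [G i j * _]mulrC => /eqP.
by rewrite -subr_eq0 -mulrBl mulf_eq0 (negbTE Gnz) orbF subr_eq0 => /eqP.
Qed.

Lemma quadG (w : 'cV[R]_n) : ((P^T *m w)^T *m S *m (P^T *m w)) 0 0 =
  \sum_i \sum_j w i 0 * d 0 i * G i j * w j 0.
Proof.
have -> : (P^T *m w)^T *m S *m (P^T *m w) = w^T *m (diag_mx d *m G) *m w.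
  by rewrite trmx_mul trmxK /G (mulmxA (diag_mx d)) -HPS !mulmxA.
rewrite quadE.
by apply: eq_bigr => i _; apply: eq_bigr => j _; rewrite mul_diag_mx mxE mulrA.
Qed.

Lemma quadG2 (w : 'cV[R]_n) : inprod (P^T *m w) (P^T *m w) =
  \sum_i \sum_j w i 0 * G i j * w j 0.
Proof.
rewrite /inprod trmx_mul trmxK /mxtrace big_ord1 -quadE.
by rewrite /G !mulmxA.
Qed.

Lemma neg_form (y : 'cV[R]_n) : (forall i, y i 0 != 0 -> d 0 i < 0) -> y != 0 ->
  ((P^T *m y)^T *m S *m (P^T *m y)) 0 0 < 0.
Proof.
move=> ysupp ynz.
pose e := \row_i Num.sqrt (- d 0 i).
pose w := diag_mx e *m y.
have -> : ((P^T *m y)^T *m S *m (P^T *m y)) 0 0 = - inprod (P^T *m w) (P^T *m w).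
  rewrite quadG quadG2 -sumrN; apply: eq_bigr => i _; rewrite -sumrN.
  apply: eq_bigr => j _; rewrite /w.
  move: (G i j) (@G_eq i j) => g Hg; rewrite !mul_diag_mx !mxE.
  have [yi0|yinz] := eqVneq (y i 0) 0; first by rewrite yi0 !(mulr0, mul0r) oppr0.
  have [yj0|yjnz] := eqVneq (y j 0) 0; first by rewrite yj0 !(mulr0, mul0r) oppr0.
  have [Gz|Gnz] := eqVneq g 0; first by rewrite Gz !(mulr0, mul0r) oppr0.
  have dij := Hg Gnz; have di := ysupp i yinz.
  have ee : Num.sqrt (- d 0 i) * Num.sqrt (- d 0 j) = - d 0 i.
    by rewrite -dij -expr2 sqr_sqrtr // oppr_ge0 ltW.
  have -> : Num.sqrt (- d 0 i) * y i 0 * g * (Num.sqrt (- d 0 j) * y j 0) =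
     (Num.sqrt (- d 0 i) * Num.sqrt (- d 0 j)) * (y i 0 * g * y j 0) by ring.
  rewrite ee; ring.
rewrite oppr_lt0 lt_def inprod_ge0 andbT; apply/eqP => /inprod_eq0 Hw.
have PTu : P^T \in unitmx by rewrite unitmx_tr.
have w0 : w = 0 by rewrite -(mulKmx PTu w) Hw mulmx0.
have [i yinz] : exists i, y i 0 != 0.
  apply/existsP; apply: contraR ynz => /existsPn H.
  by apply/eqP/colP => j; rewrite mxE; apply/eqP/negPn/H.
move/colP: w0 => /(_ i); rewrite /w mul_diag_mx !mxE => /eqP.
rewrite mulf_eq0 (negbTE yinz) orbF; apply/negP; rewrite lt0r_neq0 //.
by rewrite sqrtr_gt0 oppr_gt0 ysupp.
Qed.

Lemma sqrt_psd : (forall i, 0 <= d 0 i) ->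
  exists Rt : 'M[R]_n, Rt^T = Rt /\ Rt *m Rt = S.
Proof.
move=> dge0.
pose e := \row_i Num.sqrt (d 0 i).
pose E := diag_mx e.
have EG : E *m G = G *m E.
  apply/matrixP => i j; rewrite mul_diag_mx mul_mx_diag mxE [RHS]mxE.
  move: (G i j) (@G_eq i j) => g Hg; rewrite !mxE.
  have [Gz|Gnz] := eqVneq g 0; first by rewrite Gz mulr0 mul0r.
  by rewrite (Hg Gnz) mulrC.
have EE : E *m E = diag_mx d.
  rewrite mulmx_diag; congr diag_mx; apply/rowP => i; rewrite !mxE.
  by rewrite -expr2 sqr_sqrtr.
exists (invmx P *m E *m P); split; last first.
  rewrite -!mulmxA (mulmxA P) mulmxV // mul1mx (mulmxA E) EE -HPS.
  by rewrite mulKmx.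
have PTu : P^T \in unitmx by rewrite unitmx_tr.
suff : P *m (invmx P *m E *m P)^T *m P^T = P *m (invmx P *m E *m P) *m P^T.
  move=> /(congr1 (fun M => invmx P *m M *m invmx P^T)).
  by rewrite !mulmxA !mulVmx // !mul1mx !mulmxK.
rewrite !trmx_mul /E tr_diag_mx -/E.
have L : P *m (P^T *m (E *m (invmx P)^T)) *m P^T = G *m E.
  by rewrite !mulmxA -/G -mulmxA -trmx_mul mulmxV // trmx1 mulmx1.
have Rr : P *m (invmx P *m E *m P) *m P^T = E *m G.
  by rewrite !mulmxA mulmxV // mul1mx -mulmxA.
by rewrite L Rr EG.
Qed.

End DiagUse.

Section TrPsd.
Variable R : realType.

Lemma entry_mul m k l (A : 'M[R]_(m,k)) (B : 'M[R]_(k,l)) i j :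
  (A *m B) i j = (row i A *m col j B) 0 0.
Proof. by rewrite !mxE; apply: eq_bigr => t _; rewrite !mxE. Qed.

Lemma tr_psd_ge0 n (S X Rt : 'M[R]_n) : Rt^T = Rt -> Rt *m Rt = S -> psd X ->
  0 <= inprod S X.
Proof.
move=> RtT RtS [_ Xpsd].
rewrite /inprod -RtS trmx_mul RtT -mulmxA mxtrace_mulC -{1}RtT.
rewrite /mxtrace; apply: sumr_ge0 => j _.
by rewrite entry_mul row_mul -tr_col.
Qed.

End TrPsd.

Section Gen.
Variable R : realType.

Lemma col_mulmx k l q (A : 'M[R]_(k,l)) (B : 'M[R]_(l,q)) j :
  col j (A *m B) = A *m col j B.
Proof. by apply/colP => i; rewrite !mxE; apply: eq_bigr => t _; rewrite !mxE. Qed.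

Lemma entry_trT k l (v : 'rV[R]_l) (M : 'M[R]_(k,l)) i :
  (v *m M^T) 0 i = (v *m (row i M)^T) 0 0.
Proof. by rewrite !mxE; apply: eq_bigr => t _; rewrite !mxE. Qed.

Lemma rowv0P k (v : 'rV[R]_k) : (forall i, v 0 i = 0) -> v = 0.
Proof. by move=> H; apply/rowP => i; rewrite H mxE. Qed.

Lemma inprod_YB n p (Ai : 'M[R]_n) (Y : 'M[R]_(n,p)) (M : 'M[R]_p) :
  inprod (Ai *m Y) (Y *m M) = inprod (Y^T *m Ai *m Y) M.
Proof. by rewrite /inprod !trmx_mul trmxK !mulmxA. Qed.

Lemma inprod_AYMY n p (Ai : 'M[R]_n) (Y : 'M[R]_(n,p)) (M : 'M[R]_p) :
  inprod Ai (Y *m M *m Y^T) = inprod (Y^T *m Ai *m Y) M.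
Proof.
rewrite /inprod !trmx_mul trmxK mulmxA mxtrace_mulC !mulmxA.
by rewrite -(mulmxA _ Y M) mxtrace_mulC !mulmxA.
Qed.

End Gen.

Section Main.
Variable R : realType.
Variables (n m p : nat) (A : 'I_m -> 'M[R]_n) (b : 'I_m -> R) (C : 'M[R]_n)
  (Y : 'M[R]_(n, p)).
Hypotheses (Asym : forall i, sym_mx (A i)) (Csym : sym_mx C)
  (Hsoc : second_order_critical A C Y) (rY : \rank Y = p).

Definition SS := Smat A C Y.

Lemma SSsym : SS^T = SS.
Proof.
rewrite /SS /Smat /Aadj linearB /= Csym linear_sum /=; congr (_ - _).
by apply: eq_bigr => i _; rewrite linearZ /= Asym.
Qed.

Lemma SSY : SS *m Y = 0.
Proof. by case: Hsoc. Qed.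

Lemma YTSS : Y^T *m SS = 0.
Proof. by rewrite -SSsym -trmx_mul SSY trmx0. Qed.

Lemma YM0 (M : 'M[R]_p) : Y *m M = 0 -> M = 0.
Proof.
move=> H; have u := YTY_unit rY.
by rewrite -(mulKmx u M) -mulmxA H !mulmx0.
Qed.

Definition Bmat : 'M[R]_(m, p * p) := \matrix_(i < m) mxvec (Y^T *m A i *m Y).

Lemma tangentP Yd : tangent A Y Yd <-> mxvec Yd *m (Amat A Y)^T = 0.
Proof.
have e i : (mxvec Yd *m (Amat A Y)^T) 0 i = inprod (A i *m Y) Yd.
  by rewrite entry_trT rowK -inprod_vec inprodC.
split => [H|H i].
  by apply: rowv0P => i; rewrite e H.
by rewrite -e H mxE.
Qed.

Lemma BmP (u : 'rV[R]_(p * p)) i :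
  (u *m Bmat^T) 0 i = inprod (Y^T *m A i *m Y) (vec_mx u).
Proof. by rewrite entry_trT rowK -{1}(vec_mxK u) -inprod_vec inprodC. Qed.

Section Core.
Variables (k : nat) (U : 'M[R]_(n, k)).
Hypothesis hU : forall z : 'cV[R]_k, z != 0 -> ((U *m z)^T *m SS *m (U *m z)) 0 0 < 0.

Lemma hU_le0 (z : 'cV[R]_k) : ((U *m z)^T *m SS *m (U *m z)) 0 0 <= 0.
Proof.
have [->|nz] := eqVneq z 0; last exact/ltW/hU.
by rewrite mulmx0 mulmx0 mxE.
Qed.

Lemma core (Z : 'M[R]_(k, p)) (M : 'M[R]_p) :
  0 <= inprod (U *m Z + Y *m M) (SS *m (U *m Z + Y *m M)) -> Z = 0.
Proof.
have -> : SS *m (U *m Z + Y *m M) = SS *m (U *m Z).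
  by rewrite mulmxDr (mulmxA SS Y) SSY mul0mx addr0.
rewrite inprodDl.
have -> : inprod (Y *m M) (SS *m (U *m Z)) = 0.
  by rewrite /inprod trmx_mul -mulmxA (mulmxA Y^T) YTSS mul0mx mulmx0 mxtrace0.
rewrite addr0.
have e : inprod (U *m Z) (SS *m (U *m Z)) =
    \sum_j ((U *m col j Z)^T *m SS *m (U *m col j Z)) 0 0.
  rewrite /inprod /mxtrace; apply: eq_bigr => j _.
  by rewrite mulmxA [LHS]entry_mul row_mul -tr_col !col_mulmx.
rewrite e => Hge.
apply/matrixP => i j; rewrite mxE.
have : col j Z = 0.
  apply/eqP; apply: contraT => nz.
  have qlt := hU nz.
  have sle : \sum_j0 ((U *m col j0 Z)^T *m SS *m (U *m col j0 Z)) 0 0 <=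
     ((U *m col j Z)^T *m SS *m (U *m col j Z)) 0 0.
    rewrite (bigD1 j) //= gerDl; apply: sumr_le0 => t _; exact: hU_le0.
  by have := le_lt_trans (le_trans Hge sle) qlt; rewrite ltxx.
by move/colP/(_ i); rewrite !mxE.
Qed.

Lemma ML1 : (k * p + \rank (Bmat) <= \rank (Amat A Y))%N.
Proof.
pose LU := @lin_mulmx R n k p U; pose LY := @lin_mulmx R n p p Y; pose L := col_mx LU LY.
pose K := kermx (Amat A Y)^T; pose Ker := kermx Bmat^T.
have Lw w : w *m L = mxvec (U *m vec_mx (lsubmx w) + Y *m vec_mx (rsubmx w)).
  by rewrite -{1}(hsubmxK w) mul_row_col /LU /LY /lin_mulmx !mul_rV_lin linearD.
have vL w : vec_mx (w *m L) = U *m vec_mx (lsubmx w) + Y *m vec_mx (rsubmx w).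
  by rewrite Lw mxvecK.
have rfL : row_free L.
  apply: rowfree_inj => w Hw.
  have e0 := vL w; rewrite Hw linear0 in e0.
  have Z0 : vec_mx (lsubmx w) = 0.
    by apply: core (vec_mx (rsubmx w)) _; rewrite -e0 mulmx0 inprod0r.
  have M0 : vec_mx (rsubmx w) = 0.
    by apply: YM0; move: e0; rewrite Z0 mulmx0 add0r => <-.
  by rewrite -(hsubmxK w) -(vec_mxK (lsubmx w)) -(vec_mxK (rsubmx w)) Z0 M0 !linear0 row_mx0.
have sub : (L :&: K <= Ker *m LY)%MS.
  apply/row_subP => i.
  have rL : (row i (L :&: K) <= L)%MS by apply: submx_trans (row_sub _ _) (capmxSl _ _).
  have rK : (row i (L :&: K) <= K)%MS by apply: submx_trans (row_sub _ _) (capmxSr _ _).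
  move: rK; have [w ->] := submxP rL => rK.
  have tang : tangent A Y (vec_mx (w *m L)).
    by apply/tangentP; rewrite vec_mxK; apply/sub_kermxP.
  have hsoc := Hsoc.2 _ tang; rewrite vL in hsoc.
  have Z0 := core hsoc.
  have -> : w *m L = rsubmx w *m LY.
    by rewrite -{1}(hsubmxK w) mul_row_col -(vec_mxK (lsubmx w)) Z0 linear0 mul0mx add0r.
  apply: submxMr; apply/sub_kermxP; apply: rowv0P => j.
  rewrite BmP -inprod_YB.
  by have := tang j; rewrite vL Z0 mulmx0 add0r.
have h1 := mxrank_sum_cap L K.
have h2 : (\rank (L + K)%MS <= n * p)%N := rank_leq_col _.
have h3 : \rank L = (k * p + p * p)%N := eqP rfL.
have h4 : \rank K = (n * p - \rank (Amat A Y))%N by rewrite mxrank_ker mxrank_tr.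
have h5 : (\rank (L :&: K)%MS <= p * p - \rank Bmat)%N.
  apply: leq_trans (mxrankS sub) _; apply: leq_trans (mxrankM_maxl _ _) _.
  by rewrite mxrank_ker mxrank_tr.
have h6 : (\rank (Amat A Y) <= n * p)%N := rank_leq_col _.
have h7 : (\rank Bmat <= p * p)%N := rank_leq_col _.
lia.
Qed.

End Core.
End Main.

Section SymBasis.
Variable R : realType.
Variable p : nat.

Lemma sum_nat_const_ord c : (\sum_(i < p) c)%N = (p * c)%N.
Proof. by rewrite sum_nat_const card_ord. Qed.

Definition Tset := [set x : 'I_p * 'I_p | (x.1 <= x.2)%N].

Lemma card_T : #|Tset| = (p * p.+1)./2.
Proof.
have c1 : #|Tset| = (\sum_(a < p) \sum_(b < p) (a <= b))%N.
  rewrite -sum1_card big_mkcond /= pair_bigA /=.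
  by apply: eq_bigr => -[a b] _; rewrite inE; case: leqP.
have c2 : #|Tset| = (\sum_(a < p) \sum_(b < p) (b <= a))%N.
  by rewrite c1 exchange_big.
have c3 : (\sum_(a < p) \sum_(b < p) ((a <= b) + (b <= a)))%N = (p * p.+1)%N.
  have -> : (\sum_(a < p) \sum_(b < p) ((a <= b) + (b <= a)))%N =
            (\sum_(a < p) \sum_(b < p) (1 + (a == b)))%N.
    apply: eq_bigr => a _; apply: eq_bigr => b _.
    by rewrite -val_eqE /=; case: ltngtP.
  rewrite -[RHS](sum_nat_const_ord p.+1) /=.
  apply: eq_bigr => a _; rewrite big_split /= sum_nat_const card_ord muln1.
  rewrite -addn1; congr (_ + _)%N; rewrite (bigD1 a) //= eqxx big1 ?addn0 // => j /negPf.
  by rewrite eq_sym => ->.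
rewrite -c3; under eq_bigr do rewrite big_split. rewrite big_split /= -c1 -c2 addnn.
by rewrite half_double.
Qed.

Definition Emat : 'M[R]_(#|Tset|, p * p) :=
  \matrix_(i < #|Tset|) mxvec (delta_mx (enum_val i).1 (enum_val i).2 +
                              delta_mx (enum_val i).2 (enum_val i).1).

Lemma Emat_entry s (a b : 'I_p) :
  Emat s (mxvec_index a b) =
  ((a == (enum_val s).1) && (b == (enum_val s).2))%:R +
  ((a == (enum_val s).2) && (b == (enum_val s).1))%:R.
Proof. by rewrite mxE mxvecE !mxE. Qed.

Lemma pair_entry (x y : 'I_p * 'I_p) : (x.1 <= x.2)%N -> (y.1 <= y.2)%N ->
  ((x.1 == y.1) && (x.2 == y.2)) || ((x.1 == y.2) && (x.2 == y.1)) = (x == y).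
Proof.
case: x y => [a c] [e f] /= hac hef.
rewrite xpair_eqE; case E: ((a == e) && (c == f)) => //=.
apply/negbTE/negP => /andP [/eqP af /eqP ce].
have ef : e = f.
  by apply/val_inj/eqP; rewrite eqn_leq hef /=; move: hac; rewrite af ce.
by move: E; rewrite af ce ef !eqxx.
Qed.

Lemma Emat_free : row_free Emat.
Proof.
apply: rowfree_inj => v Hv; apply: rowv0P => t.
have xin := enum_valP t; rewrite inE in xin.
have := congr1 (fun r : 'rV[R]_(p * p) => r 0 (mxvec_index (enum_val t).1 (enum_val t).2)) Hv.
rewrite /= mxE [X in X = _ -> _](bigD1 t) //= big1; last first.
  move=> s st; rewrite Emat_entry.
  have yin := enum_valP s; rewrite inE in yin.
  have := pair_entry xin yin.
  have -> : (enum_val t == enum_val s) = false.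
    by apply/negbTE; apply: contra st => /eqP /enum_val_inj ->.
  by case/norP => /negbTE -> /negbTE ->; rewrite addr0 mulr0.
rewrite addr0 Emat_entry !eqxx /= mxE => /eqP; rewrite mulf_eq0 => /orP[/eqP //|].
by case: (_ && _); rewrite ?addr0 ?oner_eq0 // -mulr2n mulrn_eq0 oner_eq0.
Qed.

Lemma Emat_sym (u : 'rV[R]_(p * p)) : (u <= Emat)%MS -> (vec_mx u)^T = vec_mx u.
Proof.
case/submxP => w ->; apply/matrixP => a b; rewrite !mxE.
apply: eq_bigr => s _; rewrite !Emat_entry; congr (_ * _).
by rewrite addrC (andbC (b == _)) (andbC (b == _)).
Qed.

End SymBasis.

Section Face.
Variable R : realType.
Variables (n m p : nat) (A : 'I_m -> 'M[R]_n) (b : 'I_m -> R) (Y : 'M[R]_(n, p)).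
Hypotheses (HMp : Mp A b Y) (rY : \rank Y = p).
Variable F : set 'M[R]_n.
Hypotheses (Hface : is_face (SDPset A b) F) (HX : F (Y *m Y^T)).

Lemma sqnorm_cV k (w : 'cV[R]_k) : (w^T *m w) 0 0 = \sum_c w c 0 ^+ 2.
Proof. by rewrite mxE; apply: eq_bigr => c _; rewrite mxE expr2. Qed.

Lemma QB (w : 'cV[R]_p) (M : 'M[R]_p) :
  `|(w^T *m M *m w) 0 0| <= (\sum_a \sum_b `|M a b|) * (w^T *m w) 0 0.
Proof.
rewrite sqnorm_cV quadE; set s2 := \sum_c w c 0 ^+ 2.
have wa2 a : w a 0 ^+ 2 <= s2.
  rewrite /s2 (bigD1 a) //= lerDl; apply: sumr_ge0 => c _; exact: sqr_ge0.
apply: le_trans (ler_norm_sum _ _ _) _; rewrite mulr_suml; apply: ler_sum => a _.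
apply: le_trans (ler_norm_sum _ _ _) _; rewrite mulr_suml; apply: ler_sum => c _.
rewrite !normrM [_ * `|M a c|]mulrC -mulrA ler_wpM2l //.
have h1 := wa2 a; have h2 := wa2 c.
rewrite -real_normK ?num_real // in h1; rewrite -real_normK ?num_real // in h2.
have g1 := normr_ge0 (w a 0); have g2 := normr_ge0 (w c 0).
nra.
Qed.

Lemma SDP_YNY (N : 'M[R]_p) : N^T = N ->
  (forall i, Aop A (Y *m N *m Y^T) i = b i) ->
  (forall w : 'cV[R]_p, 0 <= (w^T *m N *m w) 0 0) -> SDPset A b (Y *m N *m Y^T).
Proof.
move=> NT HA Hq; split => //; split.
  by rewrite /sym_mx !trmx_mul trmxK NT mulmxA.
move=> v; have := Hq (Y^T *m v).
by rewrite trmx_mul trmxK !mulmxA.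
Qed.

Lemma FL (M : 'M[R]_p) : M^T = M ->
  (forall i, inprod (Y^T *m A i *m Y) M = 0) ->
  exists2 eps : R, 0 < eps & F (Y *m Y^T + eps *: (Y *m M *m Y^T)).
Proof.
move=> MT Hk.
set K := \sum_a \sum_b `|M a b|.
have K0 : 0 <= K by apply: sumr_ge0 => a _; apply: sumr_ge0 => c _.
set eps := (K + 1)^-1.
have eps0 : 0 < eps by rewrite invr_gt0; lra.
have epsK : eps * K <= 1.
  rewrite /eps ler_pdivrMl; lra.
have Ne (s : R) : Y *m (1%:M + s *: M) *m Y^T = Y *m Y^T + s *: (Y *m M *m Y^T).
  by rewrite mulmxDr mulmx1 mulmxDl -scalemxAr -scalemxAl.
have SD (s : R) : `|s| <= eps -> SDPset A b (Y *m Y^T + s *: (Y *m M *m Y^T)).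
  move=> hs; rewrite -Ne; apply: SDP_YNY.
  - by rewrite linearD /= tr_scalar_mx linearZ /= MT.
  - move=> i; rewrite Ne /Aop inprodDr inprodZr inprod_AYMY Hk mulr0 addr0.
    exact: HMp.
  - move=> w; rewrite mulmxDr mulmxDl mulmx1 -scalemxAr -scalemxAl.
    rewrite [X in _ <= X]mxE [X in _ + X]mxE.
    have hq := QB w M; set q := (w^T *m M *m w) 0 0 in hq *.
    set s2 := (w^T *m w) 0 0 in hq *.
    have s20 : 0 <= s2 by rewrite /s2 sqnorm_cV; apply: sumr_ge0 => c _; exact: sqr_ge0.
    have : `|s * q| <= eps * (K * s2).
      by rewrite normrM; apply: ler_pM => //; apply: normr_ge0.
    move=> h; have := ler_norm (- (s * q)); rewrite normrN => h'.
    have : eps * (K * s2) <= s2 by rewrite mulrA; apply: ler_piMl.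
    lra.
exists eps => //.
have hU : SDPset A b (Y *m Y^T + eps *: (Y *m M *m Y^T)).
  by apply: SD; rewrite ger0_norm ?(ltW eps0).
have hV : SDPset A b (Y *m Y^T + (- eps) *: (Y *m M *m Y^T)).
  by apply: SD; rewrite normrN ger0_norm ?(ltW eps0).
have [Hsub _ Hf] := Hface.
have ht : 0 < (1/2 : R) < 1.
  by apply/andP; split; lra.
have := Hf _ _ (1/2) hU hV ht.
have -> : (1 - 1/2) *: (Y *m Y^T + eps *: (Y *m M *m Y^T)) +
   1/2 *: (Y *m Y^T + - eps *: (Y *m M *m Y^T)) = Y *m Y^T.
  by apply/matrixP => i j; rewrite !mxE; field.
by move=> /(_ HX) [H _].
Qed.

Definition Theta : 'M[R]_(p * p, n * n) :=
  @lin_mulmx R n p p Y *m @lin_mulmxr R n p n Y^T.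

Lemma ThetaE (u : 'rV[R]_(p * p)) : u *m Theta = mxvec (Y *m vec_mx u *m Y^T).
Proof. by rewrite /Theta mulmxA /lin_mulmx /lin_mulmxr !mul_rV_lin /= mxvecK. Qed.

Lemma Theta_free : row_free Theta.
Proof.
apply: rowfree_inj => u; rewrite ThetaE => /(congr1 vec_mx); rewrite mxvecK linear0.
move=> H; rewrite -(vec_mxK u); set V := vec_mx u in H *.
pose G := Y^T *m Y.
have Gu : G \in unitmx := YTY_unit rY.
have : G *m V *m G = 0.
  by rewrite /G !mulmxA -(mulmxA Y^T Y V) -(mulmxA Y^T (Y *m V) Y^T) H mulmx0 mul0mx.
clearbody G; move=> /(congr1 (fun X => invmx G *m X *m invmx G)).
by rewrite mulmx0 mul0mx !mulmxA mulVmx // mul1mx mulmxK // => ->; rewrite linear0.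
Qed.

Variable d : nat.
Hypothesis Hd : aff_dim F d.

Lemma ML2 : ((p * p.+1)./2 <= d + \rank (Bmat A Y))%N.
Proof.
pose Ker := kermx (Bmat A Y)^T.
pose V := (Emat R p :&: Ker)%MS.
pose Wm := V *m Theta.
pose r := \rank Wm.
pose RB := row_base Wm.
have rows i : exists M : 'M[R]_p, [/\ M^T = M,
    (forall j, inprod (Y^T *m A j *m Y) M = 0) & row i RB = mxvec (Y *m M *m Y^T)].
  have RBW : (RB <= Wm)%MS by rewrite /RB eq_row_base.
  have [w Hw] := submxP (submx_trans (row_sub i RB) RBW).
  pose v := w *m V.
  have vV : (v <= V)%MS by apply: submxMl.
  have vE : (v <= Emat R p)%MS by apply: submx_trans vV (capmxSl _ _).
  have vK : (v <= Ker)%MS by apply: submx_trans vV (capmxSr _ _).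
  exists (vec_mx v); split.
  - exact: Emat_sym.
  - move=> j; rewrite -BmP; move/sub_kermxP: vK => ->; by rewrite mxE.
  - by rewrite Hw /Wm mulmxA ThetaE.
have [f Hf] := choice rows.
have eps i : exists e : R, 0 < e /\ F (Y *m Y^T + e *: (Y *m f i *m Y^T)).
  have [MT Hk _] := Hf i; have [e e0 He] := FL MT Hk; by exists e.
have [g Hg] := choice eps.
pose Zs i := Y *m Y^T + g i *: (Y *m f i *m Y^T).
have indep : aff_indep F (Y *m Y^T) r.
  exists Zs; split => [i|]; first by case: (Hg i).
  have -> : \matrix_(i < r) mxvec (Zs i - Y *m Y^T) = diag_mx (\row_i g i) *m RB.
    apply/row_matrixP => i; rewrite rowK row_mul row_diag_mx.
    rewrite -scalemxAl -rowE; have [_ _ ->] := Hf i.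
    by rewrite /Zs addrAC subrr add0r linearZ /= mxE.
  apply: rowfree_inj => v Hv0.
  have : (v *m diag_mx (\row_i g i)) *m RB = 0 *m RB by rewrite mul0mx -mulmxA.
  move/(row_free_inj (row_base_free Wm)) => Hv; apply: rowv0P => i.
  have := congr1 (fun x : 'rV[R]_r => x 0 i) Hv.
  rewrite /= mul_mx_diag !mxE => /eqP; rewrite mulf_eq0 => /orP [/eqP //|].
  by case: (Hg i) => /lt0r_neq0 /negbTE ->.
have hr : (r <= d)%N by apply: Hd.2 HX indep.
have h1 : r = \rank V by rewrite /r /Wm mxrankMfree // Theta_free.
have h2 := mxrank_sum_cap (Emat R p) Ker.
have h3 : \rank (Emat R p) = (p * p.+1)./2 by rewrite -card_T; apply/eqP; exact: Emat_free.
have h4 : \rank Ker = (p * p - \rank (Bmat A Y))%N by rewrite mxrank_ker mxrank_tr.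
have h5 : (\rank (Emat R p + Ker)%MS <= p * p)%N := rank_leq_col _.
have h6 : (\rank (Bmat A Y) <= p * p)%N := rank_leq_col _.
rewrite -/V in h2.
lia.
Qed.

End Face.

Section Fin.
Variable R : realType.

Lemma inprod_suml k l I (r : seq I) (P : pred I) (F : I -> 'M[R]_(k,l)) U :
  inprod (\sum_(i <- r | P i) F i) U = \sum_(i <- r | P i) inprod (F i) U.
Proof. by rewrite inprodC inprod_sumr; apply: eq_bigr => i _; rewrite inprodC. Qed.

Lemma inprod_CY n p (C : 'M[R]_n) (Y : 'M[R]_(n,p)) :
  inprod (C *m Y) Y = inprod C (Y *m Y^T).
Proof. by rewrite /inprod trmx_mul -mulmxA mxtrace_mulC -mulmxA. Qed.

Lemma YYT_SDP n m p (A : 'I_m -> 'M[R]_n) b (Y : 'M[R]_(n,p)) :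
  Mp A b Y -> SDPset A b (Y *m Y^T).
Proof.
move=> HM; split => //; split.
  by rewrite /sym_mx trmx_mul trmxK.
move=> v; rewrite mulmxA -(trmxK Y) -mulmxA -trmx_mul trmxK sqnorm_cV.
by apply: sumr_ge0 => c _; exact: sqr_ge0.
Qed.

End Fin.

Unset Implicit Arguments.

Theorem theorem4 (R : realType) (n m p : nat)
  (A : 'I_m -> 'M[R]_n) (b : 'I_m -> R) (C : 'M[R]_n) (Y : 'M[R]_(n, p)) :
  (forall i, sym_mx (A i)) -> sym_mx C ->
  (0 < p)%N ->
  assumption1 A b p ->
  Mp A b Y -> second_order_critical A C Y ->
  \rank Y = p ->
  forall F : set 'M[R]_n,
    is_face (SDPset A b) F -> relint F (Y *m Y^T) ->
  forall d : nat, aff_dim F d ->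
  let S := Smat A C Y in
  let Delta : int := ((p * p.+1)./2)%:Z - (\rank (Amat A Y))%:Z in
  (exists s : seq R, eigenvalue_list S s /\
     ((count (fun x => x < 0) s)%:Z <= ((d%:Z - Delta) %/ p%:Z)%Z)%R) /\
  ((d%:Z < Delta + p%:Z)%R ->
     psd S /\ sdp_opt A b C (Y *m Y^T) /\ P_opt A b C Y).
Proof.
move=> Asym Csym p0 _ HMp Hsoc rY F Hface Hrel d Hd S Delta.
have Ssym : S^T = S := SSsym Y Asym Csym.
have [s Hs] := sym_char_split Ssym.
have [P [dv [Pu HPS Hperm]]] := diag_decomp Ssym Hs.
have HX : F (Y *m Y^T) := Hrel.1.
set tri := ((p * p.+1)./2)%N in Delta *.
set mp := \rank (Amat A Y) in Delta *.
have ML : forall k (U : 'M[R]_(n, k)),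
    (forall z : 'cV[R]_k, z != 0 -> ((U *m z)^T *m S *m (U *m z)) 0 0 < 0) ->
    (k * p + tri <= d + mp)%N.
  move=> k U hU.
  have h1 := ML1 Asym Csym Hsoc rY hU.
  have h2 := ML2 HMp rY Hface HX Hd.
  rewrite /tri /mp; lia.
split.
  pose N := [set i | dv 0 i < 0].
  have cnt : count (fun x => x < 0) s = #|N|.
    rewrite (permP Hperm) count_map enumT cardE /enum_mem size_filter.
    by apply: eq_count => i; rewrite /= inE.
  pose Sel : 'M[R]_(n, #|N|) := \matrix_(i, j) ((i == enum_val j)%:R).
  have hU : forall z : 'cV[R]_#|N|, z != 0 ->
      (((P^T *m Sel) *m z)^T *m S *m ((P^T *m Sel) *m z)) 0 0 < 0.
    move=> z nz; rewrite -(mulmxA P^T Sel z); apply: (neg_form Ssym Pu HPS).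
    - move=> i; apply: contraR => ni; rewrite mxE big1 // => j _; rewrite !mxE.
      case: eqP => [ie|]; last by rewrite mul0r.
      by move: (enum_valP j); rewrite -ie inE (negbTE ni).
    - have [j0 zj0] : exists j0, z j0 0 != 0.
        apply/existsP; apply: contraR nz => /existsPn H.
        by apply/eqP/colP => j; rewrite mxE; apply/eqP/negPn/H.
      apply: contraNneq zj0 => /colP /(_ (enum_val j0)); rewrite !mxE.
      rewrite (bigD1 j0) //= big1 ?addr0; first by rewrite mxE eqxx mul1r => ->.
      move=> j jj0; rewrite mxE.
      case: eqP => [/enum_val_inj E|]; last by rewrite mul0r.
      by rewrite E eqxx in jj0.
  have hk := ML _ _ hU.
  exists s; split => //; rewrite cnt lez_divRL ?ltz_nat //.
  rewrite /Delta; lia.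
move=> Hlt.
have Spsd : psd S.
  split => // v; rewrite leNgt; apply/negP => Hneg.
  have hU : forall z : 'cV[R]_1, z != 0 -> ((v *m z)^T *m S *m (v *m z)) 0 0 < 0.
    move=> z nz.
    have az : z 0 0 != 0.
      by apply: contraNneq nz => z0; apply/eqP; rewrite (mx11_scalar z) z0 raddf0.
    rewrite [z]mx11_scalar mul_mx_scalar !linearZ /= -!scalemxAl 2!mxE mulrA.
    have ha : 0 < z 0 0 ^+ 2 by rewrite exprn_even_gt0.
    rewrite -expr2; nra.
  have := ML _ _ hU; rewrite /Delta in Hlt; lia.
have dge0 : forall i, 0 <= dv 0 i.
  move=> i; rewrite leNgt; apply/negP => di.
  have supp : forall j, (delta_mx i 0 : 'cV[R]_n) j 0 != 0 -> dv 0 j < 0.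
    move=> j; rewrite mxE; have [->//|ne] := eqVneq j i.
    by rewrite /= eqxx.
  have nz : (delta_mx i 0 : 'cV[R]_n) != 0.
    apply/eqP => /matrixP /(_ i 0); rewrite !mxE !eqxx /= => /eqP.
    by rewrite oner_eq0.
  by have := neg_form Ssym Pu HPS supp nz; rewrite ltNge Spsd.2.
have [Rt [RtT RtS]] := sqrt_psd Ssym Pu HPS dge0.
have Ceq : C = S + Aadj A (mu A C Y) by rewrite /S /Smat subrK.
have key : forall X, SDPset A b X ->
    inprod C X = inprod S X + \sum_i (mu A C Y) i 0 * b i.
  move=> X [HA _]; rewrite {1}Ceq inprodDl /Aadj inprod_suml; congr (_ + _).
  by apply: eq_bigr => i _; rewrite inprodZl; congr (_ * _); apply: HA.
have sdp : sdp_opt A b C (Y *m Y^T).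
  split; first exact: YYT_SDP.
  move=> X' HX'; rewrite !key //; last exact: YYT_SDP.
  rewrite lerD2r; apply: le_trans (tr_psd_ge0 RtT RtS HX'.2).
  by rewrite /inprod Ssym mulmxA (proj1 Hsoc) mul0mx mxtrace0.
split => //; split => //; split => // Y' HY'.
rewrite !inprod_CY; apply: sdp.2; exact: YYT_SDP.
Qed.
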